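(* Let $B(x)=\frac{x}{1+x^2}$, $B_0(x)=x$ and $B_j(x)=B(B_{j-1}(x))$ for $j\ge1$. For $j\ge0$, let $x_j\in\mathbb{C}$ be any root of $B_j(x)=-1$. Then $\Re(x_j)<0$. *)

(* Defs.v *)
From HB Require Import structures.
From mathcomp Require Import all_boot all_order all_algebra.
From mathcomp Require Export complex.
Set Implicit Arguments. Unset Strict Implicit. Unset Printing Implicit Defensive.
Import Order.TTheory GRing.Theory Num.Theory.
Local Open Scope ring_scope.

(* B(x) = x / (1 + x^2) on the complex numbers R[i] (R a real closed field;
   R[i] is algebraically closed, e.g. the usual C for R the reals). *)
Definition Bmap (R : rcfType) (x : R[i]) : R[i] := x / (1 + x ^+ 2).

Definition Biter (R : rcfType) (j : nat) (x : R[i]) : R[i] := iter j (@Bmap R) x.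

(* Main.v *)
Require Import Defs.
From mathcomp Require Import all_boot all_order all_algebra.
From mathcomp Require Import complex.
From mathcomp Require Import ring lra.
Import Order.TTheory GRing.Theory Num.Theory.
Local Open Scope ring_scope.

Lemma keyB (R : rcfType) (x : R[i]) : complex.Re (Bmap x) < 0 -> complex.Re x < 0.
Proof.
case: x => a b; rewrite /Bmap /=.
rewrite !expr2 /=.
move=> H. rewrite ltNge; apply/negP => Ha; move: H; apply/negP; rewrite -leNgt.
set c := (1 + (a*a - b*b)).
set d := (a*b + b*a).
rewrite !add0r.
have -> : a * (c / (c * c + d * d)) - b * - (d / (c * c + d * d)) = (a * (1 + a*a + b*b)) * (c * c + d * d)^-1.
  rewrite mulrN opprK !mulrA -mulrDl. congr (_ * _). rewrite /c /d. ring.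
apply: mulr_ge0; last by rewrite invr_ge0; nra.
apply: mulr_ge0 => //; nra.
Qed.

Theorem proposition2p7 (R : rcfType) (j : nat) (x : R[i]) :
  Biter j x = -1 -> complex.Re x < 0.
Proof.
elim: j x => [|j IH] x.
  by rewrite /Biter /= => ->; rewrite /= ltrN10.
rewrite /Biter iterSr => H.
by apply: keyB; apply: IH.
Qed.
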